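(* Consider the model $X\sim\mathbb{P}^X$, $\mu\mid X\sim N(m(X),A)$, $Z\mid\mu\sim N(\mu,\sigma^2)$ with $A\ge0$, $\sigma>0$, and let $(X_{n+1},\mu_{n+1},Z_{n+1})$ be a draw from it. Fix any deterministic function $\tilde m:\mathcal{X}\to\mathbb{R}$ and define $A_{\tilde m}:=\mathbb{E}_{m,A}[(\tilde m(X_{n+1})-Z_{n+1})^2]-\sigma^2$. Then $$\mathbb{E}_{m,A}\big[(t^*_{\tilde m,A_{\tilde m}}(X_{n+1},Z_{n+1})-\mu_{n+1})^2\big]=\inf_{\tilde A\ge0}\mathbb{E}_{m,A}\big[(t^*_{\tilde m,\tilde A}(X_{n+1},Z_{n+1})-\mu_{n+1})^2\big]=\frac{\sigma^2A_{\tilde m}}{\sigma^2+A_{\tilde m}}.$$ In particular, $\mathbb{E}_{m,A}[(t^*_{\tilde m,A_{\tilde m}}(X_{n+1},Z_{n+1})-\mu_{n+1})^2]\le\mathbb{E}_{m,A}[(t^*_{\tilde m,A}(X_{n+1},Z_{n+1})-\mu_{n+1})^2]$.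
   Context: For a function $\tilde m$ and $\tilde A\ge0$, $t^*_{\tilde m,\tilde A}(x,z)=\frac{\tilde A}{\sigma^2+\tilde A}z+\frac{\sigma^2}{\sigma^2+\tilde A}\tilde m(x)$. *)

(* Defs.v *)
From HB Require Import structures.
From mathcomp Require Import all_boot all_order all_algebra.
From mathcomp Require Import all_classical all_reals all_analysis.
Set Implicit Arguments. Unset Strict Implicit. Unset Printing Implicit Defensive.
Import Order.TTheory GRing.Theory Num.Theory.
Import numFieldNormedType.Exports.
Local Open Scope classical_set_scope.
Local Open Scope ring_scope.

(* Gaussian law N(mean, var) on R parameterized by its VARIANCE var >= 0;
   variance 0 is the point mass at the mean (the library's normal_prob is
   parameterized by the standard deviation and is not a Dirac mass at 0). *)
Definition gauss {R : realType} (mean var : R) : set R -> \bar R :=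
  if var == 0 then \d_mean else normal_prob mean (Num.sqrt var).

Definition tstar {R : realType} {T : Type} (sigma2 : R) (mt : T -> R) (At : R)
  (x : T) (z : R) : R :=
  At / (sigma2 + At) * z + sigma2 / (sigma2 + At) * mt x.

(* Expectation E_{m,A}[f(X,mu,Z)] under the hierarchical model
   X ~ PX, mu | X ~ N(m X, A), Z | mu ~ N(mu, sigma2),
   as the iterated integral against the joint law (for f >= 0). *)
Definition Emodel {R : realType} {d} {T : measurableType d}
  (PX : set T -> \bar R) (m : T -> R) (A sigma2 : R)
  (f : T -> R -> R -> \bar R) : \bar R :=
  (\int[PX]_x \int[gauss (m x) A]_mu \int[gauss mu sigma2]_z f x mu z)%E.

(* Main.v *)
Require Import Defs.
From HB Require Import structures.
From mathcomp Require Import all_boot all_order all_algebra.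
From mathcomp Require Import all_classical all_reals all_analysis.
From mathcomp Require Import ring lra measurable_realfun.
Import Order.TTheory GRing.Theory Num.Theory.
Local Open Scope classical_set_scope.
Local Open Scope ring_scope.

Module Helpers.
Set Implicit Arguments. Unset Strict Implicit. Unset Printing Implicit Defensive.
Import numFieldNormedType.Exports.
Section g.
Variable R : realType.
Variable s : R.
Hypothesis s0 : 0 < s.
Let c : R := s ^+ 2 *+ 2.
Definition ef (x : R) := expR (- x ^+ 2 / c).

Lemma is_derive_cont (g : R -> R) (dg : R -> R) :
  (forall x : R, is_derive x (1:R) g (dg x)) -> continuous g.
Proof.
move=> h x; apply: differentiable_continuous; apply/derivable1_diffP.
by have [] := h x.
Qed.

Lemma is_derive_q (x : R) : is_derive x 1 (fun y : R => - y ^+ 2 / c) (- (x *+ 2) / c).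
Proof.
have h2 := is_deriveX 2 (is_derive_id x (1:R)).
have h3 := is_deriveN h2.
have h4 := is_deriveM h3 (is_derive_cst c^-1 x 1).
have -> : (fun y : R => - y ^+ 2 / c) = (- (id ^+ 2)) * cst c^-1.
  by apply/funext => y /=; rewrite !fctE.
apply: (is_derive_eq h4).
by rewrite /= scaler0 add0r /GRing.scale /= expr1 mulr1 mulr_natl mulrC.
Qed.

Lemma is_derive_ef (x : R) : is_derive x 1 ef (ef x * (- (x *+ 2) / c)).
Proof.
have := is_derive1_comp (is_derive_expR _) (is_derive_q x).
move=> h; rewrite (_ : ef = expR \o (fun y : R => - y ^+ 2 / c)) //.
Qed.

Definition FF (x : R) := s ^+ 2 * x * ef x.
Definition ff (x : R) := (s ^+ 2 - x ^+ 2) * ef x.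

Lemma is_derive_FF (x : R) : is_derive x 1 FF (ff x).
Proof.
have h1 := is_deriveM (is_derive_id x (1:R)) (is_derive_ef x).
have h2 := is_deriveM (is_derive_cst (s ^+ 2) x 1) h1.
have -> : FF = cst (s ^+ 2) * (id * ef).
  by apply/funext => y /=; rewrite /FF !fctE mulrA.
apply: (is_derive_eq h2).
rewrite /ff /= /GRing.scale /= mulr0 addr0 mulr1 /c.
have sn0 : s != 0 by rewrite gt_eqF.
field.
exact: sn0.
Qed.

Lemma derivable_cont (g : R -> R) :
  (forall x : R, derivable g x 1) -> continuous g.
Proof.
move=> h x; apply: differentiable_continuous; apply/derivable1_diffP; exact: h.
Qed.

Lemma continuous_ef : continuous ef.
Proof. by apply: derivable_cont => x; have [] := is_derive_ef x. Qed.

Lemma continuous_FF : continuous FF.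
Proof. by apply: derivable_cont => x; have [] := is_derive_FF x. Qed.

Lemma continuous_ff : continuous ff.
Proof.
apply: derivable_cont => x.
have h := is_deriveM (is_deriveB (is_derive_cst (s ^+ 2) x (1:R))
   (is_deriveX 2 (is_derive_id x (1:R)))) (is_derive_ef x).
have -> : ff = (cst (s ^+ 2) - id ^+ 2) * ef.
  by apply/funext => y /=; rewrite /ff !fctE.
by case: h.
Qed.

Lemma ef_ge0 (x : R) : 0 <= ef x.
Proof. exact: expR_ge0. Qed.

Lemma ef_ub (x : R) : 0 < x -> x * ef x <= c * x^-1.
Proof.
move=> x0; have c0 : 0 < c by rewrite /c pmulrn_lgt0// exprn_gt0.
rewrite /ef; move: c0; generalize c => k k0.
have e1 : x ^+ 2 / k < expR (x ^+ 2 / k).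
  apply: lt_le_trans (expR_ge1Dx _); lra.
rewrite mulNr expRN.
rewrite -(@ler_pM2r _ (x / k)); last by rewrite divr_gt0.
have -> : k * x^-1 * (x / k) = 1.
  by field; rewrite ?gt_eqF.
have -> : x * (expR (x ^+ 2 / k))^-1 * (x / k) = (x ^+ 2 / k) / expR (x ^+ 2 / k).
  by rewrite expr2; field; rewrite ?gt_eqF ?expR_gt0.
rewrite ler_pdivrMr ?expR_gt0// mul1r; exact: ltW.
Qed.

Lemma cvg_FF : FF x @[x --> +oo] --> 0.
Proof.
have hx : (fun x : R => x^-1) x @[x --> +oo] --> 0.
  apply/(@gtr0_cvgV0 _ _ _ _ id); last exact: cvg_id.
  by near=> x.
have hx2 : (fun x : R => s ^+ 2 * (c * x^-1)) x @[x --> +oo] --> 0.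
  rewrite -(mulr0 (s ^+ 2)) -(mulr0 c).
  by apply: cvgMr; apply: cvgMr.
apply: (squeeze_cvgr _ (cvg_cst 0) hx2).
near=> x.
have x0 : 0 < x by near: x; exact: nbhs_pinfty_gt.
rewrite /FF -mulrA; apply/andP; split.
  by rewrite mulr_ge0 ?sqr_ge0// mulr_ge0 ?ef_ge0// ltW.
by rewrite ler_pM2l ?exprn_gt0// ef_ub.
Unshelve. all: by end_near.
Qed.

Local Notation mu := (@lebesgue_measure R).

Lemma derive1_FF (x : R) : (FF^`())%classic x = ff x.
Proof. by rewrite derive1E; apply: derive_val; exact: is_derive_FF. Qed.

Lemma ftc1 : (\int[mu]_(x in `[0%R, s]) (ff x)%:E = (FF s)%:E)%E.
Proof.
rewrite (@continuous_FTC2 _ ff FF 0 s s0).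
- by rewrite /FF mulr0 mul0r sube0.
- exact: continuous_subspaceT continuous_ff.
- split.
  + by move=> x _; have [] := is_derive_FF x.
  + by apply/cvg_at_right_filter; exact: continuous_FF.
  + by apply/cvg_at_left_filter; exact: continuous_FF.
- by move=> x _; exact: derive1_FF.
Qed.

Lemma ftc2 : (\int[mu]_(x in `[s, +oo[) (- ff x)%:E = (FF s)%:E)%E.
Proof.
rewrite (@ge0_continuous_FTC2y _ (fun x => - ff x) (fun x => - FF x) s 0).
- by rewrite sub0e EFinN oppeK.
- move=> x sx; rewrite oppr_ge0 /ff mulr_le0_ge0 ?ef_ge0// subr_le0.
  by rewrite ler_sqr ?nnegrE// ltW// (lt_le_trans s0).
- apply: continuous_subspaceT => x; apply: continuousN; exact: continuous_ff.
- by rewrite -oppr0; apply: cvgN; exact: cvg_FF.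
- by move=> x _; apply: derivableN; have [] := is_derive_FF x.
- by apply/cvg_at_right_filter; apply: cvgN; exact: continuous_FF.
- move=> x _; rewrite derive1E deriveN -?derive1E ?derive1_FF//.
Qed.

Lemma cmeas (g : R -> R) (D : set R) : continuous g -> measurable D ->
  measurable_fun D (fun x => (g x)%:E).
Proof.
move=> cg mD; apply/measurable_EFinP; apply: measurable_funTS.
exact: continuous_measurable_fun.
Qed.

Lemma continuous_x2ef : continuous (fun x : R => x ^+ 2 * ef x).
Proof.
move=> x; apply: cvgM; last exact: continuous_ef.
exact: exprn_continuous.
Qed.

Lemma continuous_s2ef : continuous (fun x : R => s ^+ 2 * ef x).
Proof.
move=> x; apply: cvgM; last exact: continuous_ef.
exact: cvg_cst.
Qed.

Lemma half : (\int[mu]_(x in `[0%R, +oo[) ((x ^+ 2 * ef x)%:E) =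
  (s ^+ 2)%:E * \int[mu]_(x in `[0%R, +oo[) (ef x)%:E)%E.
Proof.
have mI (a b : itv_bound R) : measurable [set` Interval a b] by [].
have efE0 : forall x, [set` `[0%R, +oo[] x -> (0 <= (ef x)%:E)%E.
  by move=> x _; rewrite lee_fin ef_ge0.
rewrite -(ge0_integralZl mu (mI _ _) (cmeas continuous_ef (mI _ _)) efE0); last first.
  by rewrite lee_fin sqr_ge0.
have sp : [set` `[0%R, +oo[] = [set` `[0%R, s[] `|` [set` `[s, +oo[] :> set R.
  by apply: itv_bndbnd_setU; rewrite bnd_simp ?ltW.
have dj : [disjoint [set` `[0%R, s[] & [set` `[s, +oo[] :> set R]%classic.
  apply/disj_setPS => x [] /=; rewrite !in_setE /= !in_itv/= andbT => /andP[_ xs] sx.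
  by move: xs; rewrite ltNge sx.
have mx2 (D : set R) : measurable D -> measurable_fun D (fun x => (x ^+ 2 * ef x)%:E).
  by move=> mD; exact: cmeas continuous_x2ef mD.
have ms2 (D : set R) : measurable D -> measurable_fun D (fun x => (s ^+ 2)%:E * (ef x)%:E)%E.
  move=> mD; under eq_fun do rewrite -EFinM.
  exact: cmeas continuous_s2ef mD.
have x2ge0 (D : set R) : forall x : R, D x -> (0 <= (x ^+ 2 * ef x)%:E)%E.
  by move=> x _; rewrite lee_fin mulr_ge0 ?sqr_ge0 ?ef_ge0.
have s2ge0 (D : set R) : forall x : R, D x -> (0 <= (s ^+ 2)%:E * (ef x)%:E)%E.
  by move=> x _; rewrite -EFinM lee_fin mulr_ge0 ?sqr_ge0 ?ef_ge0.
rewrite sp !ge0_integral_setU //; try (exact: (x2ge0 _) || exact: (s2ge0 _) ||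
  (apply/disj_setPS => x [] /=; rewrite ?in_setE /= !in_itv/= andbT => /andP[_ xs] sx; by move: xs; rewrite ltNge sx) || (apply: mx2; exact: measurableU) || (apply: ms2; exact: measurableU)).
have -> : (\int[mu]_(x in `[s, +oo[) (x ^+ 2 * ef x)%:E =
    \int[mu]_(x in `[s, +oo[) ((s ^+ 2)%:E * (ef x)%:E) + (FF s)%:E)%E.
  rewrite -ftc2 -ge0_integralD//; [|exact: s2ge0|exact: ms2| |].
  - apply: eq_integral => x _; rewrite -EFinM -EFinD /ff; congr EFin; ring.
  - move=> x; rewrite /= in_itv/= andbT => sx; rewrite lee_fin oppr_ge0.
    rewrite /ff mulr_le0_ge0 ?ef_ge0// subr_le0.
    by rewrite ler_sqr ?nnegrE// ltW// (lt_le_trans s0).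
  - apply: cmeas (mI _ _) => x; apply: continuousN; exact: continuous_ff.
have -> : (\int[mu]_(x in `[0%R, s[) ((s ^+ 2)%:E * (ef x)%:E) =
    \int[mu]_(x in `[0%R, s[) (x ^+ 2 * ef x)%:E + (FF s)%:E)%E.
  rewrite !integral_itv_bndo_bndc; [|exact: mx2|exact: ms2].
  rewrite -ftc1 -ge0_integralD//; [|exact: x2ge0|exact: mx2| |].
  - apply: eq_integral => x _; rewrite -EFinM -EFinD /ff; congr EFin; ring.
  - move=> x; rewrite /= in_itv/= => /andP[x0 xs]; rewrite lee_fin.
    rewrite /ff mulr_ge0 ?ef_ge0// subr_ge0.
    by rewrite ler_sqr ?nnegrE// ltW.
  - apply: cmeas (mI _ _); exact: continuous_ff.
by rewrite addeA addeAC.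
Qed.

Lemma full : (\int[mu]_x ((x ^+ 2 * ef x)%:E) =
  (s ^+ 2)%:E * \int[mu]_x (ef x)%:E)%E.
Proof.
rewrite [in LHS]ge0_symfun_integralT; last 3 first.
- by move=> x /=; rewrite mulr_ge0 ?sqr_ge0 ?ef_ge0.
- exact: continuous_x2ef.
- by move=> x /=; rewrite /ef !sqrrN.
rewrite [in RHS]ge0_symfun_integralT; last 3 first.
- exact: ef_ge0.
- exact: continuous_ef.
- by move=> x /=; rewrite /ef !sqrrN.
rewrite -set_itvcy half.
by rewrite muleCA.
Qed.

Lemma pdf0E (x : R) : normal_pdf 0 s x = normal_peak s * ef x.
Proof.
by rewrite normal_pdfE ?gt_eqF// /normal_fun subr0.
Qed.

Lemma mom2 : (\int[mu]_x ((x ^+ 2 * normal_pdf 0 s x)%:E) = (s ^+ 2)%:E)%E.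
Proof.
have pk : (0 <= (normal_peak s)%:E)%E by rewrite lee_fin normal_peak_ge0.
have h1 : ((normal_peak s)%:E * \int[mu]_x (ef x)%:E = 1)%E.
  rewrite -ge0_integralZl//; last 2 first.
  - exact: cmeas continuous_ef _.
  - by move=> x _; rewrite lee_fin ef_ge0.
  rewrite -(integral_normal_pdf 0 s); apply: eq_integral => x _.
  by rewrite pdf0E EFinM.
under eq_integral do rewrite pdf0E mulrCA EFinM.
rewrite ge0_integralZl//; last 2 first.
- exact: cmeas continuous_x2ef _.
- by move=> x _; rewrite lee_fin mulr_ge0 ?sqr_ge0 ?ef_ge0.
by rewrite full muleCA h1 mule1.
Qed.
End g.

Section sym.
Variable R : realType.
Local Notation mu := (@lebesgue_measure R).

Lemma sym_int (G : R -> R) : (forall x, 0 <= G x) -> continuous G ->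
  (\int[mu]_x (G x)%:E = \int[mu]_(x in `[0%R, +oo[) ((G x + G (- x))%:E))%E.
Proof.
move=> G0 cG.
have mG : measurable_fun [set: R] G by exact: continuous_measurable_fun.
rewrite -(setUv `[0%R, +oo[%classic) ge0_integral_setU//=; last 4 first.
- exact: measurableC.
- by apply/measurable_EFinP; rewrite setUv.
- by move=> x _; rewrite lee_fin.
- exact/disj_setPCl.
rewrite setCitvr integral_itv_bndo_bndc; last exact/measurable_EFinP/measurable_funTS.
rewrite -{2}oppr0 ge0_integration_by_substitutionNy//; last first.
- exact: continuous_subspaceT.
rewrite -ge0_integralD//=.
- by move=> x _; rewrite lee_fin.
- exact/measurable_EFinP/measurable_funTS.
- by move=> x _; rewrite lee_fin.
- apply/measurable_EFinP/measurable_funTS.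
  apply: continuous_measurable_fun => x; apply: continuous_comp; last exact: cG.
  exact: continuousN.
Qed.
End sym.

Section quad.
Variable R : realType.
Local Notation mu := (@lebesgue_measure R).

Lemma cont_poly2 (c k a b : R) : continuous (fun x : R => c + k * (a * x + b) ^+ 2).
Proof.
move=> x; apply: cvgD; first exact: cvg_cst.
apply: cvgM; first exact: cvg_cst.
apply: (@cvg_comp _ _ _ (fun y => a * y + b) (fun y => y ^+ 2)); last exact: exprn_continuous.
apply: cvgD; last exact: cvg_cst.
apply: cvgM; first exact: cvg_cst.
exact: cvg_id.
Qed.

Lemma quad (s c k a b : R) : 0 < s -> 0 <= c -> 0 <= k ->
  (\int[mu]_x (((c + k * (a * x + b) ^+ 2) * normal_pdf 0 s x)%:E) =
   (c + k * (a ^+ 2 * s ^+ 2 + b ^+ 2))%:E)%E.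
Proof.
move=> s0 c0 k0.
have p0e x : normal_pdf 0 s (- x) = normal_pdf 0 s x.
  by rewrite !pdf0E// /ef sqrrN.
have sn0 : s != 0 by rewrite gt_eqF.
have cp : continuous (normal_pdf 0 s) by exact: continuous_normal_pdf sn0.
have cG (c' k' a' b' : R) : continuous (fun x : R => (c' + k' * (a' * x + b') ^+ 2) * normal_pdf 0 s x).
  move=> x; apply: cvgM; [exact: cont_poly2|exact: cp].
have G0 (c' k' a' b' : R) : 0 <= c' -> 0 <= k' ->
    forall x : R, 0 <= (c' + k' * (a' * x + b') ^+ 2) * normal_pdf 0 s x.
  by move=> c'0 k'0 x; rewrite mulr_ge0 ?normal_pdf_ge0// addr_ge0// mulr_ge0// sqr_ge0.
have ka0 : 0 <= k * a ^+ 2 by rewrite mulr_ge0// sqr_ge0.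
have cb0 : 0 <= c + k * b ^+ 2 by rewrite addr_ge0// mulr_ge0// sqr_ge0.
rewrite (sym_int (G0 _ _ a b c0 k0) (cG _ _ _ _)).
rewrite (_ : (\int[mu]_(x in _) _ = \int[mu]_(x in `[0%R, +oo[)
   ((((c + k * b ^+ 2) + (k * a ^+ 2) * (1 * x + 0) ^+ 2) * normal_pdf 0 s x +
     ((c + k * b ^+ 2) + (k * a ^+ 2) * (1 * (- x) + 0) ^+ 2) * normal_pdf 0 s (- x))%:E))%E); last first.
  apply: eq_integral => x _; congr EFin; rewrite !p0e; ring.
rewrite -(sym_int (G0 _ _ 1 0 cb0 ka0) (cG _ _ _ _)).
have -> : (\int[mu]_x (((c + k * b ^+ 2 + k * a ^+ 2 * (1 * x + 0) ^+ 2) * normal_pdf 0 s x)%:E) =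
   \int[mu]_x (((c + k * b ^+ 2) * normal_pdf 0 s x)%:E +
   (k * a ^+ 2)%:E * (x ^+ 2 * normal_pdf 0 s x)%:E))%E.
  by apply: eq_integral => x _; rewrite -EFinM -EFinD; congr EFin; ring.
rewrite ge0_integralD//; last 4 first.
- by move=> x _; rewrite lee_fin mulr_ge0// normal_pdf_ge0.
- apply: cmeas => // x; apply: cvgM; [exact: cvg_cst|exact: cp].
- by move=> x _; rewrite mule_ge0// lee_fin mulr_ge0 ?sqr_ge0// normal_pdf_ge0.
- apply: emeasurable_funM; first exact: measurable_cst.
  apply: cmeas => // x; apply: cvgM; [exact: exprn_continuous|exact: cp].
rewrite ge0_integralZl//; last 2 first.
- apply: cmeas => // x; apply: cvgM; [exact: exprn_continuous|exact: cp].
- by move=> x _; rewrite lee_fin mulr_ge0 ?sqr_ge0// normal_pdf_ge0.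
rewrite mom2//.
under eq_integral do rewrite EFinM.
rewrite ge0_integralZl//; last 2 first.
- by apply: cmeas.
- by move=> x _; rewrite lee_fin normal_pdf_ge0.
rewrite integral_normal_pdf mule1 -EFinM -EFinD; congr EFin; ring.
Qed.
End quad.

Section trans.
Variable R : realType.
Local Notation mu := (@lebesgue_measure R).

Lemma trans_int (G : R -> R) (m : R) : (forall x, 0 <= G x) -> continuous G ->
  (\int[mu]_x (G x)%:E = \int[mu]_x (G (x + m))%:E)%E.
Proof.
move=> G0 cG.
have dF : ((fun x : R => x + m)^`())%classic = cst 1.
  apply/funext => x; rewrite derive1E; apply: derive_val.
  exact: (is_derive_shift x 1 m).
rewrite (@increasing_ge0_integration_by_substitutionT _ (fun x => x + m) G).
- by apply: eq_integral => x _; rewrite dF /= mulr1.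
- by move=> x y xy; rewrite ltrD2r.
- by rewrite dF; exact: cst_continuous.
- by rewrite dF; exact: is_cvg_cst.
- by rewrite dF; exact: is_cvg_cst.
- by move=> x; have [] := is_derive_shift x 1 m.
- exact: cvg_addrr_Ny.
- exact: cvg_addrr.
- exact: cG.
- exact: G0.
Qed.

Lemma density_int (m s : R) (f : R -> \bar R) : (forall x, 0 <= f x)%E ->
  measurable_fun setT f ->
  (\int[normal_prob m s]_x f x = \int[mu]_x (f x * (normal_pdf m s x)%:E))%E.
Proof.
move=> f0 mf.
have numu := normal_prob_dominates m s.
rewrite -(Radon_Nikodym_SigmaFinite.change_of_variables numu f0 measurableT mf).
apply: ae_eq_integral => //.
- apply: emeasurable_funM => //.
  exact: measurable_int (Radon_Nikodym_SigmaFinite.f_integrable numu).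
- apply: emeasurable_funM => //; apply/measurable_EFinP.
  exact: measurable_normal_pdf.
apply: ae_eqe_mul2l.
apply: integral_ae_eq => //.
- exact: Radon_Nikodym_SigmaFinite.f_integrable numu.
- apply/measurable_EFinP; exact: measurable_normal_pdf.
move=> E _ mE.
by rewrite -(Radon_Nikodym_SigmaFinite.f_integral numu mE).
Qed.
End trans.

Section gaussq.
Variable R : realType.
Local Notation mu := (@lebesgue_measure R).

Lemma pdf_shift (mean s x : R) : s != 0 ->
  normal_pdf mean s (x + mean) = normal_pdf 0 s x.
Proof. by move=> sn0; rewrite !normal_pdfE// /normal_fun addrK subr0. Qed.

Lemma gauss_quad (mean v c k a b : R) : 0 <= v -> 0 <= c -> 0 <= k ->
  (\int[gauss mean v]_z ((c + k * (a * (z - mean) + b) ^+ 2)%:E) =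
   (c + k * (a ^+ 2 * v + b ^+ 2))%:E)%E.
Proof.
move=> v0 c0 k0.
have cP : continuous (fun z : R => c + k * (a * (z - mean) + b) ^+ 2).
  move=> x; apply: cvgD; first exact: cvg_cst.
  apply: cvgM; first exact: cvg_cst.
  apply: (@cvg_comp _ _ _ (fun y => a * (y - mean) + b) (fun y => y ^+ 2)); last exact: exprn_continuous.
  apply: cvgD; last exact: cvg_cst.
  apply: cvgM; first exact: cvg_cst.
  apply: cvgB; [exact: cvg_id|exact: cvg_cst].
have mP : measurable_fun setT (fun z : R => (c + k * (a * (z - mean) + b) ^+ 2)%:E).
  exact: cmeas.
rewrite /gauss; case: eqP => [->|/eqP vn0].
  rewrite integral_dirac// diracT mul1e subrr mulr0 add0r mulr0 add0r.
  done.
have s0 : 0 < Num.sqrt v by rewrite sqrtr_gt0 lt_neqAle eq_sym vn0.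
have f0 : forall x : R, (0 <= (c + k * (a * (x - mean) + b) ^+ 2)%:E)%E.
  by move=> x; rewrite lee_fin addr_ge0// mulr_ge0// sqr_ge0.
pose phi : measurableTypeR R -> R := id.
have mphi : measurable_fun setT phi by move=> _ B mB; rewrite setTI.
rewrite (_ : normal_prob mean (Num.sqrt v) = pushforward (normal_prob mean (Num.sqrt v)) phi); last first.
  by apply/funext => A.
rewrite ge0_integral_pushforward//.
rewrite preimage_setT.
apply: eq_trans (density_int _ _ f0 mP) _.
under eq_integral do rewrite -EFinM.
rewrite (trans_int mean); last 2 first.
- by move=> x; rewrite mulr_ge0 ?normal_pdf_ge0// addr_ge0// mulr_ge0// sqr_ge0.
- move=> x; apply: cvgM; first exact: cP.
  by apply: continuous_normal_pdf; rewrite gt_eqF.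
under eq_integral do rewrite pdf_shift ?gt_eqF// addrK.
by rewrite quad// sqr_sqrtr.
Qed.
End gaussq.

Lemma EM (R : realType) (d : measure_display) (T : measurableType d)
  (PX : probability T R) (m : T -> R) (A s2 : R) (mt : T -> R) (al be : R) :
  measurable_fun setT m -> measurable_fun setT mt -> 0 <= A -> 0 <= s2 ->
  Emodel PX m A s2 (fun x mu z => ((al * (z - mu) + be * (mt x - mu)) ^+ 2)%:E) =
  ((al ^+ 2 * s2 + be ^+ 2 * A)%:E +
    (be ^+ 2)%:E * \int[PX]_x ((mt x - m x) ^+ 2)%:E)%E.
Proof.
move=> mm mmt A0 s20.
have h1 (x : T) (mu : R) : (\int[gauss mu s2]_z ((al * (z - mu) + be * (mt x - mu)) ^+ 2)%:E =
    ((al ^+ 2 * s2) + be ^+ 2 * (-1 * (mu - m x) + (mt x - m x)) ^+ 2)%:E)%E.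
  rewrite (_ : (fun z => _) = (fun z => (0 + 1 * (al * (z - mu) + be * (mt x - mu)) ^+ 2)%:E)); last first.
    by apply/funext => z; rewrite add0r mul1r.
  rewrite gauss_quad// add0r mul1r; congr EFin; ring.
have h2 (x : T) : (\int[gauss (m x) A]_mu
    ((al ^+ 2 * s2) + be ^+ 2 * (-1 * (mu - m x) + (mt x - m x)) ^+ 2)%:E =
    ((al ^+ 2 * s2 + be ^+ 2 * A) + be ^+ 2 * (mt x - m x) ^+ 2)%:E)%E.
  rewrite gauss_quad//; last 2 first.
  - by rewrite mulr_ge0// sqr_ge0.
  - exact: sqr_ge0.
  congr EFin; ring.
rewrite /Emodel.
transitivity (\int[PX]_x ((al ^+ 2 * s2 + be ^+ 2 * A)%:E + (be ^+ 2)%:E * ((mt x - m x) ^+ 2)%:E))%E.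
  apply: eq_integral => x _; rewrite -EFinM -EFinD -h2.
  by congr integral; apply/funext => mu; exact: h1.
have mq : measurable_fun setT (fun x => ((mt x - m x) ^+ 2)%:E).
  apply/measurable_EFinP; apply: measurable_funX; exact: measurable_funB.
rewrite ge0_integralD//; try exact: emeasurable_funM.
- rewrite integral_cst//.
  have P1 := probability_setT PX.
  rewrite [X in (_ * X)%E](_ : _ = 1%E); last exact: P1.
  rewrite mule1 ge0_integralZl//.
  + by move=> x _; rewrite lee_fin sqr_ge0.
  + by rewrite lee_fin sqr_ge0.
- by move=> x _; rewrite lee_fin addr_ge0// mulr_ge0// sqr_ge0.
- by move=> x _; rewrite mule_ge0// lee_fin sqr_ge0.
Qed.

Lemma alg1 (R : realType) (s2 B : R) : 0 < s2 -> 0 <= B ->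
  (B / (s2 + B)) ^+ 2 * s2 + (s2 / (s2 + B)) ^+ 2 * B = s2 * B / (s2 + B).
Proof.
move=> s0 B0; have h : s2 + B != 0 by rewrite gt_eqF// ltr_pwDl.
by field.
Qed.

Lemma alg2 (R : realType) (s2 B At : R) : 0 < s2 -> 0 <= B -> 0 <= At ->
  s2 * B / (s2 + B) <= (At / (s2 + At)) ^+ 2 * s2 + (s2 / (s2 + At)) ^+ 2 * B.
Proof.
move=> s0 B0 At0.
have h1 : s2 + B != 0 by rewrite gt_eqF// ltr_pwDl.
have h2 : s2 + At != 0 by rewrite gt_eqF// ltr_pwDl.
rewrite -subr_ge0.
have -> : (At / (s2 + At)) ^+ 2 * s2 + (s2 / (s2 + At)) ^+ 2 * B - s2 * B / (s2 + B)
   = (s2 ^+ 2 * (At - B) ^+ 2) / ((s2 + At) ^+ 2 * (s2 + B)).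
  by field; rewrite h1 h2.
apply: divr_ge0; first by rewrite mulr_ge0// sqr_ge0.
by rewrite mulr_ge0 ?sqr_ge0// addr_ge0// ltW.
Qed.

End Helpers.
Import Helpers.
Unset Implicit Arguments.

Theorem proposition1 (R : realType) (d : measure_display) (T : measurableType d)
  (PX : probability T R) (m : T -> R) (A sigma : R) (mt : T -> R) :
  measurable_fun setT m -> measurable_fun setT mt ->
  0 <= A -> 0 < sigma ->
  (Emodel PX m A (sigma ^+ 2) (fun x _ z => ((mt x - z) ^+ 2)%:E) < +oo)%E ->
  let Amt := fine (Emodel PX m A (sigma ^+ 2) (fun x _ z => ((mt x - z) ^+ 2)%:E))
             - sigma ^+ 2 in
  let risk := fun At : R =>
    Emodel PX m A (sigma ^+ 2)
      (fun x mu z => ((tstar (sigma ^+ 2) mt At x z - mu) ^+ 2)%:E) in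
  [/\ risk Amt = ereal_inf [set risk At | At in [set At : R | 0 <= At]],
      ereal_inf [set risk At | At in [set At : R | 0 <= At]]
        = (sigma ^+ 2 * Amt / (sigma ^+ 2 + Amt))%:E
    & (risk Amt <= risk A)%E].
Proof.
move=> mm mmt A0 sig0 Hfin Amt risk.
have s20 : 0 < sigma ^+ 2 by rewrite exprn_gt0.
set s2 := sigma ^+ 2 in s20 Hfin Amt risk *.
set D := (\int[PX]_x ((mt x - m x) ^+ 2)%:E)%E.
have D0 : (0 <= D)%E by apply: integral_ge0 => x _; rewrite lee_fin sqr_ge0.
have E1 : Emodel PX m A s2 (fun x _ z => ((mt x - z) ^+ 2)%:E) = ((s2 + A)%:E + D)%E.
  have -> : (fun x (_ : R) z => ((mt x - z) ^+ 2)%:E) =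
      (fun x mu z => ((-1 * (z - mu) + 1 * (mt x - mu)) ^+ 2)%:E).
    apply/funext => x; apply/funext => mu; apply/funext => z.
    congr EFin; ring.
  rewrite EM//; last exact: ltW.
  by rewrite sqrrN !expr1n !mul1r mul1e.
have Dfin : D \is a fin_num.
  rewrite ge0_fin_numE//; move: Hfin; rewrite E1.
  apply: le_lt_trans; apply: lee_paddl => //; rewrite lee_fin addr_ge0// ltW//.
set dd := fine D.
have DE : D = dd%:E by rewrite /dd fineK.
have dd0 : 0 <= dd by rewrite fine_ge0.
have AmtE : Amt = A + dd.
  rewrite /Amt E1 DE -EFinD /=; ring.
have riskE At : 0 <= At ->
    risk At = ((At / (s2 + At)) ^+ 2 * s2 + (s2 / (s2 + At)) ^+ 2 * (A + dd))%:E.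
  move=> At0; rewrite /risk.
  have h2 : s2 + At != 0 by rewrite gt_eqF// ltr_pwDl.
  have -> : (fun x mu z => ((tstar s2 mt At x z - mu) ^+ 2)%:E) =
      (fun x mu z => (((At / (s2 + At)) * (z - mu) + (s2 / (s2 + At)) * (mt x - mu)) ^+ 2)%:E).
    apply/funext => x; apply/funext => mu; apply/funext => z.
    rewrite /tstar; congr EFin; congr (_ ^+ 2); field; exact: h2.
  rewrite EM//; last exact: ltW.
  by rewrite -/D DE -EFinM -EFinD mulrDr addrA.
have B0 : 0 <= A + dd by rewrite addr_ge0.
have Amt0 : 0 <= Amt by rewrite AmtE.
have key : risk Amt = ereal_inf [set risk At | At in [set At : R | 0 <= At]].
  apply/eqP; rewrite eq_le; apply/andP; split.
    apply/ereal_infP => _ [At At0 <-].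
    rewrite riskE// riskE// lee_fin AmtE alg1//; exact: alg2.
  by apply: ereal_inf_lbound; exists Amt.
split.
- exact: key.
- by rewrite -key riskE// AmtE alg1.
- by rewrite riskE// riskE// lee_fin AmtE alg1//; exact: alg2.
Qed.
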